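(* There exists $\ell_0\in\mathbb{N}$ such that for all integers $\ell\ge \ell_0$ the following holds. Let $\delta>0$ and let $m,k\in\mathbb{N}$ with $m\le 2^k$. Let $G$ be a digraph on $n=\ell m$ vertices with $\delta^0(G)\ge \delta n$. Then there exists a partition of $V(G)$ into sets $V_1,\dots,V_m$ such that, for all $i\in\{1,\dots,m\}$, $|V_i|=\ell$ and \[ \delta^0(G[V_i])\ \ge\ \Big(\delta-2\ell^{-1/3}\sum_{0\le j\le k-1}2^{-j/3}\Big)\ell\ \ge\ \big(\delta-10\ell^{-1/3}\big)\ell . \]
   Context: For a digraph $G$, $d^+(v)$ and $d^-(v)$ denote the out-degree and in-degree of a vertex $v$, and $\delta^0(G)=\min\{d^+(v),d^-(v):v\in V(G)\}$ is the minimum semi-degree. For $W\subseteq V(G)$, $G[W]$ is the subdigraph induced on $W$. *)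

(* Defs.v *)
From HB Require Import structures.
From mathcomp Require Import all_boot all_order all_algebra.
From mathcomp Require Import all_classical all_reals all_analysis.
Set Implicit Arguments. Unset Strict Implicit. Unset Printing Implicit Defensive.

(* A digraph on a finite vertex type T is an irreflexive relation e : rel T
   (e x y = arc from x to y). *)
Definition digraph (T : finType) (e : rel T) : Prop := irreflexive e.

Definition outdeg_in (T : finType) (e : rel T) (W : {set T}) (v : T) : nat :=
  #|[set w in W | e v w]|.
Definition indeg_in (T : finType) (e : rel T) (W : {set T}) (v : T) : nat :=
  #|[set w in W | e w v]|.

(* Minimum semi-degree delta^0(G[W]) (conventionally #|T| when W is empty). *)
Definition min_semideg (T : finType) (e : rel T) (W : {set T}) : nat :=
  \big[minn/#|T|]_(v in W) minn (outdeg_in e W v) (indeg_in e W v).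

(* Main.v *)
Require Import Defs.
From HB Require Import structures.
From mathcomp Require Import all_boot all_order all_algebra.
From mathcomp Require Import all_classical all_reals all_analysis.
From mathcomp Require Import ring lra zify.
Import Order.TTheory GRing.Theory Num.Theory.
Local Open Scope ring_scope.

Lemma bigmin_le_seq (I : eqType) (r : seq I) (P : pred I) (F : I -> nat) x0 v :
  v \in r -> P v -> (\big[minn/x0]_(u <- r | P u) F u <= F v)%N.
Proof.
elim: r => // a r IH; rewrite inE big_cons => /orP [/eqP <-|vr] Pv.
  by rewrite Pv geq_minl.
case: ifP => _; last exact: IH.
by rewrite (leq_trans (geq_minr _ _)) // IH.
Qed.

Lemma semideg_le (T : finType) (e : rel T) (W : {set T}) v : v \in W ->
  (min_semideg e W <= outdeg_in e W v)%N /\ (min_semideg e W <= indeg_in e W v)%N.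
Proof.
move=> vW; have H := @bigmin_le_seq T (index_enum T) (mem W)
   (fun v => minn (outdeg_in e W v) (indeg_in e W v)) #|T| v (mem_index_enum v) vW.
by split; apply: (leq_trans H); rewrite ?geq_minl ?geq_minr.
Qed.

Lemma semideg_ge (R : realType) (T : finType) (e : rel T) (W : {set T}) (t : R) :
  (0 < #|W|)%N ->
  (forall v, v \in W -> t <= (outdeg_in e W v)%:R /\ t <= (indeg_in e W v)%:R) ->
  t <= (min_semideg e W)%:R.
Proof.
case/card_gt0P => v0 v0W H.
have tT : t <= #|T|%:R.
  apply: le_trans (H v0 v0W).1 _; rewrite ler_nat /outdeg_in; exact: max_card.
rewrite /min_semideg; elim/big_ind: _ => //.
  move=> x y hx hy; case: (leqP x y) => xy.
  by []. by [].
by move=> v vW; have [h1 h2] := H v vW; rewrite /minn; case: ifP.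
Qed.

Set Implicit Arguments. Unset Strict Implicit. Unset Printing Implicit Defensive.

Lemma expR_up_small (R : realType) (eta : R) : 0 <= eta -> eta <= 2^-1 ->
  expR eta <= 1 + eta + 2 * eta ^+ 2.
Proof.
move=> h0 h1.
have h := expR_ge1Dx (- eta).
rewrite expRN in h.
have Ep := expR_gt0 eta.
have h2 : (1 - eta) * expR eta <= 1.
  by have := ler_wpM2r (ltW Ep) h; rewrite mulVf ?(lt0r_neq0 Ep).
nra.
Qed.

Lemma expRN_up (R : realType) (eta : R) : 0 <= eta ->
  expR (- eta) <= 1 - eta + eta ^+ 2.
Proof.
move=> h0.
have h := expR_ge1Dx eta.
have Ep := expR_gt0 eta.
have h2 : (1 + eta) * expR (- eta) <= 1.
  have := ler_wpM2r (ltW (expR_gt0 (- eta))) h.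
  by rewrite expRN mulfV ?(lt0r_neq0 Ep).
have Fp := expR_gt0 (- eta).
nra.
Qed.

Lemma pow_expR_le (R : realType) (p b : R) (n : nat) : 0 <= p -> p <= 1 -> 0 <= b ->
  (1 - p + p * b) ^+ n <= expR (n%:R * (p * (b - 1))).
Proof.
move=> p0 p1 b0.
rewrite expRM_natl; apply: lerXn2r.
- by rewrite nnegrE; nra.
- by rewrite nnegrE expR_ge0.
- by have := expR_ge1Dx (p * (b - 1)); lra.
Qed.

Lemma tail_up_real (R : realType) (p lam N : R) (n : nat) :
  0 <= p -> p <= 1 -> 0 < N -> n%:R <= N -> 0 < lam -> lam <= 2 * N ->
  expR (- (lam / (4 * N)) * (p * n%:R + lam)) *
    (1 - p + p * expR (lam / (4 * N))) ^+ n <= expR (- (lam ^+ 2 / (8 * N))).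
Proof.
move=> p0 p1 N0 nN l0 l2.
set eta := lam / (4 * N).
have e0 : 0 <= eta by rewrite /eta divr_ge0 // ?ltW // mulr_gt0.
have e1 : eta <= 2^-1.
  rewrite /eta ler_pdivrMr ?mulr_gt0 //; lra.
have hE := @expR_up_small R eta e0 e1.
apply: le_trans (ler_wpM2l (expR_ge0 _) (@pow_expR_le R p _ n p0 p1 (expR_ge0 eta))) _.
rewrite -expRD ler_expR.
have etal : eta * lam = lam ^+ 2 / (4 * N) by rewrite /eta; field; lra.
have etaN : N * eta ^+ 2 = lam ^+ 2 / (16 * N) by rewrite /eta; field; lra.
have n0 : 0 <= n%:R :> R by [].
have q1 : n%:R * p * (expR eta - 1) <= n%:R * p * (eta + 2 * eta ^+ 2).
  by apply: ler_wpM2l; [nra | lra].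
have q2 : n%:R * p * eta ^+ 2 <= N * eta ^+ 2.
  by apply: ler_wpM2r; [nra | nra].
have : lam ^+ 2 / (16 * N) - lam ^+ 2 / (4 * N) <= - (lam ^+ 2 / (8 * N)).
  have -> : lam ^+ 2 / (16 * N) - lam ^+ 2 / (4 * N) = - (3 * (lam ^+ 2 / (16 * N))) by field; lra.
  have : 0 <= lam ^+ 2 / (16 * N) by apply: divr_ge0; nra.
  have -> : lam ^+ 2 / (8 * N) = 2 * (lam ^+ 2 / (16 * N)) by field; lra.
  lra.
nra.
Qed.

Lemma tail_low_real (R : realType) (p lam N : R) (n : nat) :
  0 <= p -> p <= 1 -> 0 < N -> n%:R <= N -> 0 < lam -> lam <= 2 * N ->
  expR (lam / (4 * N) * (p * n%:R - lam)) *
    (1 - p + p * expR (- (lam / (4 * N)))) ^+ n <= expR (- (lam ^+ 2 / (8 * N))).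
Proof.
move=> p0 p1 N0 nN l0 l2.
set eta := lam / (4 * N).
have e0 : 0 <= eta by rewrite /eta divr_ge0 // ?ltW // mulr_gt0.
have hE := @expRN_up R eta e0.
apply: le_trans (ler_wpM2l (expR_ge0 _) (@pow_expR_le R p _ n p0 p1 (expR_ge0 (- eta)))) _.
rewrite -expRD ler_expR.
have etal : eta * lam = lam ^+ 2 / (4 * N) by rewrite /eta; field; lra.
have etaN : N * eta ^+ 2 = lam ^+ 2 / (16 * N) by rewrite /eta; field; lra.
have n0 : 0 <= n%:R :> R by [].
have q1 : n%:R * p * (expR (- eta) - 1) <= n%:R * p * (- eta + eta ^+ 2).
  by apply: ler_wpM2l; [nra | lra].
have q2 : n%:R * p * eta ^+ 2 <= N * eta ^+ 2.
  by apply: ler_wpM2r; [nra | nra].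
have : lam ^+ 2 / (16 * N) - lam ^+ 2 / (4 * N) <= - (lam ^+ 2 / (8 * N)).
  have -> : lam ^+ 2 / (16 * N) - lam ^+ 2 / (4 * N) = - (3 * (lam ^+ 2 / (16 * N))) by field; lra.
  have : 0 <= lam ^+ 2 / (16 * N) by apply: divr_ge0; nra.
  have -> : lam ^+ 2 / (8 * N) = 2 * (lam ^+ 2 / (16 * N)) by field; lra.
  lra.
nra.
Qed.
Definition rho (R : realType) (T : finType) (W : {set T}) (p : R) (x : T) (b : bool) : R :=
  if x \in W then (if b then p else 1 - p) else (if b then 0 else 1).

Definition wt (R : realType) (T : finType) (W : {set T}) (p : R) (f : {ffun T -> bool}) : R :=
  \prod_x rho W p x (f x).

Definition Xc (T : finType) (A : {set T}) (f : {ffun T -> bool}) : nat :=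
  #|[set x in A | f x]|.

Lemma wt_sum (R : realType) (T : finType) (W : {set T}) (p : R) :
  \sum_f wt W p f = 1.
Proof.
rewrite /wt -bigA_distr_bigA /=; apply: big1 => x _.
by rewrite big_bool /rho; case: (x \in W) => /=; ring.
Qed.

Lemma wt_ge0 (R : realType) (T : finType) (W : {set T}) (p : R) f :
  0 <= p -> p <= 1 -> 0 <= wt W p f.
Proof.
move=> p0 p1; apply: prodr_ge0 => x _; rewrite /rho.
by case: (x \in W); case: (f x) => //; lra.
Qed.

Lemma mgf (R : realType) (T : finType) (W A : {set T}) (p b : R) :
  A \subset W ->
  \sum_f wt W p f * b ^+ Xc A f = (1 - p + p * b) ^+ #|A|.
Proof.
move=> AW.
have E f : wt W p f * b ^+ Xc A f =
   \prod_x (rho W p x (f x) * (if (x \in A) && f x then b else 1)).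
  rewrite big_split /= /Xc -prodr_const; congr (_ * _).
  by rewrite big_mkcond /=; apply: eq_bigr => x _; rewrite inE.
rewrite (eq_bigr _ (fun f _ => E f)).
rewrite -(bigA_distr_bigA (fun x (c : bool) => rho W p x c * (if (x \in A) && c then b else 1))) /=.
rewrite -prodr_const [RHS]big_mkcond /=; apply: eq_bigr => x _.
rewrite big_bool /rho /=.
case xA: (x \in A).
  by rewrite (fintype.subsetP AW x xA) /=; ring.
by case: (x \in W) => /=; ring.
Qed.

Lemma tail_up (R : realType) (T : finType) (W A : {set T}) (p eta t : R) :
  A \subset W -> 0 <= p -> p <= 1 -> 0 <= eta ->
  \sum_f wt W p f * (if t < (Xc A f)%:R then 1 else 0) <=
    expR (- eta * t) * (1 - p + p * expR eta) ^+ #|A|.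
Proof.
move=> AW p0 p1 e0.
rewrite -(mgf p _ AW) mulr_sumr; apply: ler_sum => f _.
rewrite mulrCA; apply: ler_wpM2l; first exact: wt_ge0.
rewrite -expRM_natl -expRD.
case: ltP => /= h; last exact: expR_ge0.
apply: le_trans (expR_ge1Dx _); rewrite lerDl; nra.
Qed.

Lemma tail_low (R : realType) (T : finType) (W A : {set T}) (p eta t : R) :
  A \subset W -> 0 <= p -> p <= 1 -> 0 <= eta ->
  \sum_f wt W p f * (if (Xc A f)%:R < t then 1 else 0) <=
    expR (eta * t) * (1 - p + p * expR (- eta)) ^+ #|A|.
Proof.
move=> AW p0 p1 e0.
rewrite -(mgf p _ AW) mulr_sumr; apply: ler_sum => f _.
rewrite mulrCA; apply: ler_wpM2l; first exact: wt_ge0.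
rewrite -expRM_natl -expRD.
case: ltP => /= h; last exact: expR_ge0.
apply: le_trans (expR_ge1Dx _); rewrite lerDl; nra.
Qed.

Lemma ind_le (R : realType) (x c lam : R) :
  (if lam < `|x - c| then 1 else 0) <=
  (if c + lam < x then 1 else 0) + (if x < c - lam then 1 else 0) :> R.
Proof.
case: (ltrP lam `|x - c|) => h; last first.
  by case: (ltrP (c + lam) x); case: (ltrP x (c - lam)) => //; lra.
move: h; rewrite ltr_normr => /orP [h|h];
  by case: (ltrP (c + lam) x); case: (ltrP x (c - lam)) => //; lra.
Qed.

Lemma dev_bound (R : realType) (T : finType) (W A : {set T}) (p lam : R) :
  A \subset W -> 0 <= p -> p <= 1 -> (0 < #|W|)%N -> 0 < lam -> lam <= 2 * #|W|%:R ->
  \sum_f wt W p f * (if lam < `|(Xc A f)%:R - p * #|A|%:R| then 1 else 0) <=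
    2 * expR (- (lam ^+ 2 / (8 * #|W|%:R))).
Proof.
move=> AW p0 p1 W0 l0 l2.
have N0 : 0 < #|W|%:R :> R by rewrite ltr0n.
have AN : #|A|%:R <= #|W|%:R :> R by rewrite ler_nat subset_leq_card.
set eta := lam / (4 * #|W|%:R).
have e0 : 0 <= eta by rewrite /eta divr_ge0 // ?ltW // mulr_gt0.
have h1 := tail_up (p * #|A|%:R + lam) AW p0 p1 e0.
have h2 := tail_low (p * #|A|%:R - lam) AW p0 p1 e0.
have h3 := tail_up_real (n := #|A|) p0 p1 N0 AN l0 l2.
have h4 := tail_low_real (n := #|A|) p0 p1 N0 AN l0 l2.
apply: le_trans (_ : \sum_f (wt W p f * (if p * #|A|%:R + lam < (Xc A f)%:R then 1 else 0)
   + wt W p f * (if (Xc A f)%:R < p * #|A|%:R - lam then 1 else 0)) <= _).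
  apply: ler_sum => f _; rewrite -mulrDr; apply: ler_wpM2l; first exact: wt_ge0.
  exact: ind_le.
rewrite big_split /=.
have -> : 2 * expR (- (lam ^+ 2 / (8 * #|W|%:R))) =
   expR (- (lam ^+ 2 / (8 * #|W|%:R))) + expR (- (lam ^+ 2 / (8 * #|W|%:R))) by ring.
apply: lerD.
  exact: le_trans h1 h3.
exact: le_trans h2 h4.
Qed.

Lemma exists_good (R : realType) (T I : finType) (W : {set T}) (F : I -> {set T})
    (J : {set I}) (p lam : R) :
  0 <= p -> p <= 1 -> (0 < #|W|)%N -> 0 < lam -> lam <= 2 * #|W|%:R ->
  (forall i, F i \subset W) ->
  (2 * #|J| + 2)%:R * expR (- (lam ^+ 2 / (8 * #|W|%:R))) < 1 ->
  exists f : {ffun T -> bool},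
    (forall x, x \notin W -> f x = false) /\
    `|(Xc W f)%:R - p * #|W|%:R| <= lam /\
    (forall i, i \in J -> `|(Xc (F i) f)%:R - p * #|F i|%:R| <= lam).
Proof.
move=> p0 p1 W0 l0 l2 FW hlt.
set eps := expR (- (lam ^+ 2 / (8 * #|W|%:R))).
pose bad A (f : {ffun T -> bool}) := lam < `|(Xc A f)%:R - p * #|A|%:R|.
case: (boolP [exists f, (wt W p f != 0) && ~~ bad W f && [forall i in J, ~~ bad (F i) f]]).
  case/existsP => f /andP [/andP [wf bW] /forallP bF]; exists f; split; last split.
  - move=> x xW; apply/negP => fx; move: wf; rewrite /wt (bigD1 x) //= /rho.
    by rewrite (negbTE xW) fx mul0r eqxx.
  - by move: bW; rewrite /bad -leNgt.
  - by move=> i iJ; have := bF i; rewrite iJ /= /bad -leNgt.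
move/existsPn => H; exfalso.
have ind0 (b : bool) : 0 <= (if b then 1 else 0 : R) by case: b.
have key f : wt W p f <= wt W p f * (if bad W f then 1 else 0) +
    \sum_(i in J) wt W p f * (if bad (F i) f then 1 else 0).
  have w0 := wt_ge0 W f p0 p1.
  have s0 : 0 <= \sum_(i in J) wt W p f * (if bad (F i) f then 1 else 0).
    by apply: sumr_ge0 => i _; apply: mulr_ge0.
  have := H f; case: eqP => [->|_] /=.
    by rewrite mul0r add0r => _; apply: sumr_ge0 => i _; rewrite mul0r.
  case: (boolP (bad W f)) => /= [_ _|_ /forallPn [i]]; first by rewrite mulr1 lerDl.
  rewrite negb_imply negbK => /andP [iJ bi].
  rewrite (bigD1 i) //= bi mulr1 mulr0 add0r lerDl.
  by apply: sumr_ge0 => j _; apply: mulr_ge0.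
have h0 : \sum_f wt W p f <= \sum_f (wt W p f * (if bad W f then 1 else 0) +
    \sum_(i in J) wt W p f * (if bad (F i) f then 1 else 0)).
  by apply: ler_sum => f _; exact: key.
move: h0; rewrite wt_sum big_split /= exchange_big /=.
have d1 := dev_bound (subxx W) p0 p1 W0 l0 l2.
have d2 : \sum_(i in J) \sum_f wt W p f * (if bad (F i) f then 1 else 0) <= \sum_(i in J) 2 * eps.
  by apply: ler_sum => i _; exact: dev_bound (FW i) p0 p1 W0 l0 l2.
rewrite sumr_const in d2.
move=> h; have := lerD d1 d2; rewrite -/eps => h2.
have h3 := le_trans h h2.
move: hlt; rewrite -/eps natrD natrM mulrDl.
have e : 2 * eps *+ #|J| = 2 * #|J|%:R * eps by rewrite -mulr_natr; ring.
rewrite e in h3.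
lra.
Qed.

Lemma extend_set (T : finType) (A B : {set T}) (n : nat) :
  A \subset B -> (#|A| <= n)%N -> (n <= #|B|)%N ->
  exists C : {set T}, [/\ A \subset C, C \subset B & #|C| = n].
Proof.
move=> AB hA hB.
suff H : forall k (A : {set T}), A \subset B -> (#|A| + k <= #|B|)%N ->
  exists C : {set T}, [/\ A \subset C, C \subset B & #|C| = (#|A| + k)%N].
  have [|C [h1 h2 h3]] := H (n - #|A|)%N A AB; first by rewrite subnKC.
  by exists C; rewrite h3 subnKC.
elim=> [|k IH] A' AB' hk.
  by exists A'; rewrite addn0 subxx AB'.
have : ~~ (B \subset A').
  apply/negP => BA; have := subset_leq_card BA; rewrite leqNgt.
  move/negP; apply; lia.
case/fintype.subsetPn => x xB xA.
have sub1 : x |: A' \subset B by rewrite finset.subUset finset.sub1set xB AB'.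
have c1 : #|x |: A'| = (#|A'|.+1)%N by rewrite cardsU1 xA.
have := IH (x |: A') sub1; rewrite c1 addSnnS => /(_ hk) [C [h1 h2 h3]].
exists C; split => //; apply: fintype.subset_trans h1; exact: finset.subsetUr.
Qed.

Lemma card_mono (T : finType) (U U' S : {set T}) : U \subset U' ->
  (#|S :&: U| <= #|S :&: U'|)%N /\ (#|S :&: U'| <= #|S :&: U| + (#|U'| - #|U|))%N.
Proof.
move=> UU; have s1 : S :&: U \subset S :&: U' by apply: finset.setIS.
split; first exact: subset_leq_card.
have e1 := cardsDS s1.
have s2 : (S :&: U') :\: (S :&: U) \subset U' :\: U.
  apply/fintype.subsetP => x; rewrite !inE; case: (x \in S); case: (x \in U) => //=.
have e2 := cardsDS UU.
have := subset_leq_card s2; rewrite e1 e2.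
have := subset_leq_card s1; lia.
Qed.

Definition Fset (T : finType) (e : rel T) (W : {set T}) (v : T) (b : bool) : {set T} :=
  if b then [set w in W | e v w] else [set w in W | e w v].

Lemma Fset_sub (T : finType) (e : rel T) (W : {set T}) v b : Fset e W v b \subset W.
Proof. by apply/fintype.subsetP => x; rewrite /Fset; case: b; rewrite inE => /andP []. Qed.

Lemma split_set (R : realType) (T : finType) (e : rel T) (W : {set T}) (a : nat) (lam : R) :
  (a <= #|W|)%N -> (0 < #|W|)%N -> 0 < lam -> lam <= 2 * #|W|%:R ->
  (4 * #|W| + 2)%:R * expR (- (lam ^+ 2 / (8 * #|W|%:R))) < 1 ->
  exists U : {set T}, [/\ U \subset W, #|U| = a &
    forall v b, v \in W ->
      `|#|Fset e W v b :&: U|%:R - a%:R / #|W|%:R * #|Fset e W v b|%:R| <= 2 * lam].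
Proof.
move=> aN N0 l0 l2 hlt.
have N0' : 0 < #|W|%:R :> R by rewrite ltr0n.
set p := a%:R / #|W|%:R.
have p0 : 0 <= p by rewrite /p divr_ge0.
have p1 : p <= 1 by rewrite /p ler_pdivrMr // mul1r ler_nat.
pose J := finset.setX W [set: bool].
have cJ : #|J| = (#|W| * 2)%N by rewrite /J cardsX cardsT card_bool.
pose F := fun i : T * bool => Fset e W i.1 i.2.
have FW i : F i \subset W by exact: Fset_sub.
have hlt' : (2 * #|J| + 2)%:R * expR (- (lam ^+ 2 / (8 * #|W|%:R))) < 1.
  by rewrite cJ; have -> : (2 * (#|W| * 2) = 4 * #|W|)%N by lia.
have [f [fW [hW hF]]] := exists_good p0 p1 N0 l0 l2 FW hlt'.
pose U0 := [set x in W | f x].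
have U0W : U0 \subset W by apply/fintype.subsetP => x; rewrite inE => /andP [].
have XcE (A : {set T}) : A \subset W -> Xc A f = #|A :&: U0|.
  move=> AW; rewrite /Xc; apply: eq_card => x; rewrite !inE.
  by case xA: (x \in A) => //=; rewrite (fintype.subsetP AW x xA).
have pN : p * #|W|%:R = a%:R by rewrite /p mulfVK // lt0r_neq0.
have hU0 : `|#|U0|%:R - a%:R| <= lam.
  by move: hW; rewrite XcE // (finset.setIidPr U0W) pN.
have hS v b : v \in W -> `|#|Fset e W v b :&: U0|%:R - p * #|Fset e W v b|%:R| <= lam.
  move=> vW; have := hF (v, b); rewrite -XcE ?Fset_sub //; apply.
  by rewrite /J finset.in_setX vW inE.
case: (leqP #|U0| a) => hA.
  have [U [h1 h2 h3]] := extend_set U0W hA aN.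
  exists U; split => // v b vW.
  have [c1 c2] := card_mono (Fset e W v b) h1.
  have r1 : (#|Fset e W v b :&: U0|%:R <= #|Fset e W v b :&: U|%:R :> R) by rewrite ler_nat.
  have r2 : (#|Fset e W v b :&: U|%:R <= #|Fset e W v b :&: U0|%:R + (#|U|%:R - #|U0|%:R) :> R).
    by rewrite -natrB ?h3 // -natrD ler_nat -h3.
  have := hS v b vW; rewrite ler_norml => /andP [s1 s2].
move: hU0; rewrite ler_norml => /andP [u1 u2]; rewrite h3 in r2.
rewrite ler_norml; apply/andP; split; lra.
have hA' : (a <= #|U0|)%N by apply: ltnW.
have c0 : (#|(finset.set0 : {set T})| <= a)%N by rewrite cards0.
have [U [h1 h2 h3]] := extend_set (finset.sub0set U0) c0 hA'.
exists U; split => //; first exact: fintype.subset_trans h2 U0W.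
move=> v b vW.
have [c1 c2] := card_mono (Fset e W v b) h2.
have r1 : (#|Fset e W v b :&: U|%:R <= #|Fset e W v b :&: U0|%:R :> R) by rewrite ler_nat.
have r2 : (#|Fset e W v b :&: U0|%:R <= #|Fset e W v b :&: U|%:R + (#|U0|%:R - #|U|%:R) :> R).
  by rewrite -natrB ?h3 1?ltnW // -natrD ler_nat -h3.
have := hS v b vW; rewrite ler_norml => /andP [s1 s2].
move: hU0; rewrite ler_norml => /andP [u1 u2]; rewrite h3 in r2.
rewrite ler_norml; apply/andP; split; lra.
Qed.

Lemma powR_cube (R : realType) (a r : R) : 0 <= a -> (a `^ r) ^+ 3 = a `^ (r * 3).
Proof. by move=> a0; rewrite powRrM powR_mulrn // powR_ge0. Qed.

Lemma s_cube (R : realType) (l k : nat) : (0 < l)%N ->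
  let s : R := l%:R `^ (- 3^-1) * 2 `^ (- (k%:R / 3)) in
  0 < s /\ s ^+ 3 * (l%:R * 2%:R ^+ k) = 1.
Proof.
move=> l0 s; split.
  by rewrite /s mulr_gt0 // powR_gt0 // ltr0n.
rewrite /s exprMn !powR_cube ?ler0n //.
have -> : - 3^-1 * 3 = -1 :> R by field.
have -> : - (k%:R / 3) * 3 = - k%:R :> R by field.
rewrite powR_inv1 ?ler0n // powRN powR_mulrn ?ler0n //.
rewrite mulrACA mulVf ?pnatr_eq0 -?lt0n // mul1r mulVf //.

Qed.


Lemma geom_bound (R : realType) (k : nat) :
  \sum_(j < k) ((2 : R) `^ (- (j%:R / 3))) <= 5.
Proof.
set rho : R := 2 `^ (- 3^-1).
have r0 : 0 <= rho by rewrite powR_ge0.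
have E j : (2 : R) `^ (- (j%:R / 3)) = rho ^+ j.
  by rewrite -powR_mulrn // -powRrM; congr (_ `^ _); field.
have r3 : rho ^+ 3 = 2^-1.
  rewrite /rho powR_cube ?ler0n //.
  have -> : - 3^-1 * 3 = -1 :> R by field.
  by rewrite powR_inv1 ?ler0n.
have r45 : rho <= 4 / 5.
  rewrite leNgt; apply/negP => h.
  have : (4 / 5) ^+ 3 < rho ^+ 3 by rewrite ltrXn2r // nnegrE; lra.
  rewrite r3; lra.
suff H : \sum_(j < k) rho ^+ j <= 5 - 5 * rho ^+ k.
  under eq_bigr do rewrite E.
  by apply: le_trans H _; rewrite lerBlDr lerDl mulr_ge0 // exprn_ge0.
elim: k => [|k IH]; first by rewrite big_ord0 expr0; lra.
rewrite big_ord_recr /= exprS.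
have : 0 <= rho ^+ k by rewrite exprn_ge0.
nra.
Qed.

Definition K0 : nat := 10 * 288 ^ 4.

Lemma big_ok_gen (R : realType) (x : R) : 0 < x -> 10 * 288 ^+ 4 < x ->
  10 * x ^+ 3 * expR (- (x / 72)) < 1.
Proof.
move=> x0 xK.
have c0 : 0 < 288 :> R by rewrite ltr0n.
have e1 : expR (x / 72) = expR (x / 288) ^+ 4.
  by rewrite -expRM_natl; congr expR; field.
have e2 : 1 + x / 288 <= expR (x / 288) := expR_ge1Dx _.
have xc0 : 0 < x / 288 by rewrite divr_gt0.
have e3 : (x / 288) ^+ 4 <= expR (x / 288) ^+ 4.
  rewrite lerXn2r ?nnegrE ?expR_ge0 ?ltW //.
  by apply: lt_le_trans e2; rewrite ltrDr.
have e4 : 10 * x ^+ 3 < (x / 288) ^+ 4.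
  rewrite expr_div_n ltr_pdivlMr ?exprn_gt0 //.
  have -> : (x ^+ 4 = x ^+ 3 * x) by rewrite exprSr.
  have h3 : 0 < x ^+ 3 by rewrite exprn_gt0.
  move: (288 ^+ 4 : R) xK => c4 xK.
  have : 0 < (x - 10 * c4) * x ^+ 3 by rewrite mulr_gt0 // subr_gt0.
  lra.
rewrite expRN -[X in _ < X](mulfV (lt0r_neq0 (expR_gt0 (x / 72)))).
rewrite ltr_pM2r ?invr_gt0 ?expR_gt0 // e1.
exact: lt_le_trans e4 e3.
Qed.

Lemma hK (R : realType) : K0%:R = 10 * 288 ^+ 4 :> R.
Proof. rewrite /K0. rewrite natrM. rewrite natrX. done. Qed.
Lemma big_ok (R : realType) (x : R) : 0 < x -> K0%:R ^+ 3 < x ^+ 3 ->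
  10 * x ^+ 3 * expR (- (x / 72)) < 1.
Proof.
move=> x0 hx; apply: big_ok_gen => //.
rewrite -(hK R).
have k0 : 0 <= K0%:R :> R by apply: ler0n.
move: (K0%:R : R) k0 hx => k k0 hx.
rewrite ltNge; apply/negP => h.
have : x ^+ 3 <= k ^+ 3 by rewrite lerXn2r // nnegrE ltW.
by rewrite leNgt hx.
Qed.

Definition loss (R : realType) (l k : nat) : R :=
  2 * (l%:R `^ (- 3^-1)) * \sum_(j < k) ((2 : R) `^ (- (j%:R / 3))).

Lemma loss0 (R : realType) l : loss R l 0 = 0.
Proof. by rewrite /loss big_ord0 mulr0. Qed.

Lemma lossS (R : realType) l k :
  loss R l k.+1 = loss R l k + 2 * (l%:R `^ (- 3^-1) * 2 `^ (- (k%:R / 3))).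
Proof. by rewrite /loss big_ord_recr /= mulrDr mulrA. Qed.

Lemma loss_mono (R : realType) l k : loss R l k <= loss R l k.+1.
Proof.
rewrite lossS lerDl; apply: mulr_ge0 => //; apply: mulr_ge0; exact: powR_ge0.
Qed.

Lemma deg_real (R : realType) (delta s p N a F c lam : R) :
  0 <= p -> p <= 1 -> p * N = a -> 0 <= s -> N <= 3 * a -> N <= 3 * (N - a) ->
  lam = N * s / 3 -> delta * N <= F -> `|c - p * F| <= 2 * lam ->
  (delta - 2 * s) * a <= c /\ (delta - 2 * s) * (N - a) <= F - c.
Proof.
move=> p0 p1 pN s0 h1 h2 hl hF; rewrite ler_norml => /andP [d1 d2].
have e1 : p * (delta * N) <= p * F by apply: ler_wpM2l.
have e2 : (1 - p) * (delta * N) <= (1 - p) * F by apply: ler_wpM2l; lra.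
have e3 : N * s <= 3 * a * s by apply: ler_wpM2r.
have e4 : N * s <= 3 * (N - a) * s by apply: ler_wpM2r.
have e5 : p * (delta * N) = delta * a by rewrite -pN; ring.
have e6 : (1 - p) * (delta * N) = delta * (N - a) by rewrite -pN; ring.
subst lam; split; nra.
Qed.

Definition RecP (R : realType) (T : finType) (e : rel T) (l k m : nat) : Prop :=
  forall (delta : R) (W : {set T}), #|W| = (l * m)%N ->
  (forall v, v \in W -> delta * (l * m)%:R <= (outdeg_in e W v)%:R /\
                        delta * (l * m)%:R <= (indeg_in e W v)%:R) ->
  exists g : T -> nat, (forall v, v \in W -> (g v < m)%N) /\
    forall i, (i < m)%N -> #|[set v in W | g v == i]| = l /\
      forall v, v \in [set v in W | g v == i] ->
        (delta - loss R l k) * l%:R <= (outdeg_in e [set v in W | g v == i] v)%:R /\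
        (delta - loss R l k) * l%:R <= (indeg_in e [set v in W | g v == i] v)%:R.

Lemma rec_base (R : realType) (T : finType) (e : rel T) (l m : nat) :
  (m <= 1)%N -> RecP R e l 0 m.
Proof.
move=> hm delta W cW hW; exists (fun _ => 0%N).
case: m hm cW hW => [|[|//]] _ cW hW.
  split => // v vW; have : (0 < #|W|)%N by apply/card_gt0P; exists v.
  by rewrite cW muln0.
split => // i; case: i => // _.
have Ew : [set v in W | (0 == 0)%N] = W.
  by apply/finset.setP => v; rewrite inE eqxx andbT.
rewrite Ew cW muln1; split => // v vW.
by rewrite loss0 subr0; have := hW v vW; rewrite muln1.
Qed.

Lemma rec_mono (R : realType) (T : finType) (e : rel T) (l k m : nat) :
  RecP R e l k m -> RecP R e l k.+1 m.
Proof.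
move=> H delta W cW hW; have [g [g1 g2]] := H delta W cW hW.
exists g; split => // i im; have [c d] := g2 i im; split => // v vC.
have [h1 h2] := d v vC.
have lm : (delta - loss R l k.+1) * l%:R <= (delta - loss R l k) * l%:R.
  by apply: ler_wpM2r => //; rewrite lerB // loss_mono.
by split; apply: le_trans lm _.
Qed.

Lemma nat_h1 (a b c : nat) : (a < b)%N -> (b <= c)%N -> (a < c)%N.
Proof. lia. Qed.
Lemma nat_h2 (m1 m2 y : nat) : (y < m2)%N -> (m1 + y < m1 + m2)%N.
Proof. lia. Qed.
Lemma nat_h3 (m1 y i : nat) : (i < m1)%N -> (m1 + y == i) = false.
Proof. move=> h; apply/eqP; lia. Qed.
Lemma nat_h4 (m1 m2 i : nat) : (m1 <= i)%N -> (i < m1 + m2)%N -> (i - m1 < m2)%N.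
Proof. lia. Qed.
Lemma nat_h5 (a b i : nat) : (a < b)%N -> (b <= i)%N -> (a == i) = false.
Proof. move=> h1 h2; apply/eqP; lia. Qed.
Lemma nat_h6 (m1 y i : nat) : (m1 <= i)%N -> (m1 + y == i)%N = (y == (i - m1)%N).
Proof. by move=> h; apply/eqP/eqP; lia. Qed.

Lemma rec_step (R : realType) (T : finType) (e : rel T) (l k m : nat) :
  (0 < l)%N ->
  (forall x : R, 0 < x -> l%:R <= x ^+ 3 -> 10 * x ^+ 3 * expR (- (x / 72)) < 1) ->
  (forall m', (m' <= 2 ^ k)%N -> RecP R e l k m') ->
  (2 ^ k < m)%N -> (m <= 2 ^ k.+1)%N -> RecP R e l k.+1 m.
Proof.
move=> l0 Hbig IH hm1 hm2 delta W cW hW.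
rewrite expnS in hm2.
have P0 : (0 < 2 ^ k)%N by rewrite expn_gt0.
have [s0 s3] := s_cube R k l0.
set s : R := l%:R `^ (- 3^-1) * 2 `^ (- (k%:R / 3)) in s0 s3.
have Lk : delta - loss R l k.+1 = delta - 2 * s - loss R l k by rewrite lossS /s; ring.
rewrite -natrX in s3.
move: (2 ^ k)%N P0 hm1 hm2 s3 IH => P P0 hm1 hm2 s3 IH.
set m2 := (m %/ 2)%N; set m1 := (m - m %/ 2)%N.
have em : (m1 + m2)%N = m by rewrite /m1 /m2; lia.
have m1P : (m1 <= P)%N by rewrite /m1; lia.
have m2P : (m2 <= P)%N by rewrite /m2; lia.
have m13 : (m <= 3 * m1)%N by rewrite /m1; lia.
have m23 : (m <= 3 * m2)%N by rewrite /m2; lia.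
have m0 : (0 < m)%N by lia.
set N : R := (l * m)%:R.
set x : R := s^-1.
have x0 : 0 < x by rewrite invr_gt0.
have xs : x * s = 1 by rewrite mulVf // gt_eqF.
have x3 : x ^+ 3 = (l * P)%:R.
  apply: (@mulfI _ (s ^+ 3)); first by rewrite expf_neq0 // gt_eqF.
  by rewrite /x -exprMn divff ?gt_eqF // expr1n natrM s3.
have lP : (l * P < l * m)%N by rewrite ltn_pmul2l.
have xN : x ^+ 3 < N by rewrite x3 /N ltr_nat.
have Nx : N <= 2 * x ^+ 3.
  rewrite x3 /N -natrM ler_nat.
  have : (l * m <= l * (2 * P))%N by rewrite leq_mul2l hm2 orbT.
  lia.
have x31 : 1 <= x ^+ 3 by rewrite x3 (ler_nat R 1); rewrite muln_gt0 l0 P0.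
have lx : l%:R <= x ^+ 3 by rewrite x3 ler_nat leq_pmulr.
have s1 : s <= 1.
  rewrite leNgt; apply/negP => h.
  have : 1 < s ^+ 3 by rewrite exprn_egt1.
  have : s ^+ 3 * x ^+ 3 = 1 by rewrite -exprMn mulrC xs expr1n.
  nra.
have N0 : 0 < N by rewrite /N ltr0n muln_gt0 l0.
set lam : R := N * s / 3.
have lam0 : 0 < lam by rewrite /lam divr_gt0 // mulr_gt0.
have lam2 : lam <= 2 * N.
  rewrite /lam; have : N * s <= N * 1 by rewrite ler_wpM2l // ltW.
  lra.
have expo : x / 72 <= lam ^+ 2 / (8 * N).
  have -> : lam ^+ 2 / (8 * N) = N * s ^+ 2 / 72.
    by rewrite /lam; field; rewrite !pnatr_eq0 -!lt0n m0 l0.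
  apply: ler_wpM2r; first by rewrite invr_ge0.
  have -> : x = x ^+ 3 * s ^+ 2.
    by rewrite -[in LHS](mulr1 x) -(expr1n _ 2) -xs exprMn; ring.
  by apply: ler_wpM2r; [rewrite exprn_ge0 // ltW | exact: ltW].
have hlt : (4 * #|W| + 2)%:R * expR (- (lam ^+ 2 / (8 * #|W|%:R))) < 1.
  rewrite cW -/N.
  apply: le_lt_trans (Hbig x x0 lx).
  have eA : (4 * (l * m) + 2)%:R = 4 * N + 2 :> R by rewrite /N natrD natrM.
  rewrite eA; apply: ler_pM.
  - by lra.
  - exact: expR_ge0.
  - by lra.
  - by rewrite ler_expR lerN2.
have aN : (l * m1 <= #|W|)%N by rewrite cW leq_mul2l; lia.
have W0 : (0 < #|W|)%N by rewrite cW muln_gt0 l0.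
have lam2' : lam <= 2 * #|W|%:R by rewrite cW.
have [U [UW cU dev]] := split_set e aN W0 lam0 lam2' hlt.
set p : R := (l * m1)%:R / #|W|%:R in dev.
have p0 : 0 <= p by rewrite /p divr_ge0.
have p1 : p <= 1 by rewrite /p ler_pdivrMr ?ltr0n // mul1r ler_nat.
have pN : p * N = (l * m1)%:R by rewrite /p cW -/N mulfVK // gt_eqF.
have Na : N - (l * m1)%:R = (l * m2)%:R.
  rewrite /N -natrB; last by rewrite leq_mul2l -em leq_addr orbT.
  by rewrite -mulnBr -em addKn.
have h1 : N <= 3 * (l * m1)%:R.
  by rewrite /N -natrM ler_nat mulnCA leq_mul2l m13 orbT.
have h2 : N <= 3 * (N - (l * m1)%:R).
  by rewrite Na /N -natrM ler_nat mulnCA leq_mul2l m23 orbT.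
have key v b : v \in W ->
   (delta - 2 * s) * (l * m1)%:R <= #|Fset e W v b :&: U|%:R /\
   (delta - 2 * s) * (l * m2)%:R <= #|Fset e W v b|%:R - #|Fset e W v b :&: U|%:R.
  move=> vW; rewrite -Na.
  have hF : delta * N <= #|Fset e W v b|%:R.
    by have [ho hi] := hW v vW; case: b; rewrite /Fset.
  have hl : lam = N * s / 3 by [].
  have := deg_real p0 p1 pN (ltW s0) h1 h2 hl hF (dev v b vW).
  done.
set U2 := W :\: U.
have U2W : U2 \subset W by apply: subsetDl.
have cU2 : #|U2| = (l * m2)%N.
  by rewrite cardsDS // cW cU -mulnBr -{1}em addKn.
have FU v b : Fset e W v b :&: U = (if b then [set w in U | e v w] else [set w in U | e w v]).
  apply/finset.setP => w; rewrite /Fset; case: b; rewrite !inE;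
  by case wU: (w \in U); rewrite ?andbF ?andbT // (fintype.subsetP UW w wU).
have FU2 v b : Fset e W v b :\: U = (if b then [set w in U2 | e v w] else [set w in U2 | e w v]).
  apply/finset.setP => w; rewrite /Fset /U2; case: b; rewrite !inE;
  by case: (w \in U); case: (w \in W).
have cFU2 v b : #|Fset e W v b :\: U|%:R = #|Fset e W v b|%:R - #|Fset e W v b :&: U|%:R :> R.
  by rewrite cardsD natrB // subset_leq_card // subsetIl.
have hypU : forall v, v \in U ->
   (delta - 2 * s) * (l * m1)%:R <= (outdeg_in e U v)%:R /\
   (delta - 2 * s) * (l * m1)%:R <= (indeg_in e U v)%:R.
  move=> v vU; have vW := fintype.subsetP UW v vU.
  have := key v true vW; have := key v false vW; rewrite !FU.
  by move=> [a1 _] [a2 _].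
have hypU2 : forall v, v \in U2 ->
   (delta - 2 * s) * (l * m2)%:R <= (outdeg_in e U2 v)%:R /\
   (delta - 2 * s) * (l * m2)%:R <= (indeg_in e U2 v)%:R.
  move=> v vU2; have vW := fintype.subsetP U2W v vU2.
  have := key v true vW; have := key v false vW; rewrite -!cFU2 !FU2.
  by move=> [_ a1] [_ a2].
have [g1 [g1r g1c]] := IH m1 m1P (delta - 2 * s) U cU hypU.
have [g2 [g2r g2c]] := IH m2 m2P (delta - 2 * s) U2 cU2 hypU2.
have m1m : (m1 <= m)%N by rewrite -em leq_addr.
exists (fun v => if v \in U then g1 v else (m1 + g2 v)%N); split.
  move=> v vW; case vU: (v \in U); first exact: nat_h1 (g1r v vU) m1m.
  have vU2 : v \in U2 by rewrite /U2 inE vU vW.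
  by rewrite -em; apply: nat_h2; apply: g2r.
move=> i im; case: (ltnP i m1) => hi.
  have C : [set v in W | (if v \in U then g1 v else (m1 + g2 v)%N) == i] =
           [set v in U | g1 v == i].
    apply/finset.setP => v; rewrite !inE.
    case vU: (v \in U); first by rewrite (fintype.subsetP UW v vU).
    by rewrite nat_h3 // andbF.
  rewrite C; have [c d] := g1c i hi; split => // v vC.
  by rewrite Lk; apply: d.
have hi2 : (i - m1 < m2)%N by apply: nat_h4; rewrite // em.
have C : [set v in W | (if v \in U then g1 v else (m1 + g2 v)%N) == i] =
         [set v in U2 | g2 v == (i - m1)%N].
  apply/finset.setP => v; rewrite /U2 !inE.
  case vU: (v \in U) => /=; first by rewrite (nat_h5 (g1r v vU) hi) andbF.
  by rewrite nat_h6.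
rewrite C; have [c d] := g2c (i - m1)%N hi2; split => // v vC.
by rewrite Lk; apply: d.
Qed.

Unset Implicit Arguments.

Lemma rec_all (R : realType) (T : finType) (e : rel T) (l : nat) :
  (0 < l)%N ->
  (forall x : R, 0 < x -> l%:R <= x ^+ 3 -> 10 * x ^+ 3 * expR (- (x / 72)) < 1) ->
  forall k m, (m <= 2 ^ k)%N -> RecP R e l k m.
Proof.
move=> l0 Hbig; elim=> [|k IH] m hm; first by apply: rec_base; rewrite expn0 in hm.
case: (leqP m (2 ^ k)) => h; first exact: rec_mono (IH m h).
exact: rec_step l0 Hbig IH h hm.
Qed.

Theorem lemma2p1 :
  exists l0 : nat, forall l : nat, (l0 <= l)%N ->
  forall (R : realType) (delta : R) (m k : nat),
  0 < delta -> (m <= 2 ^ k)%N ->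
  forall (T : finType) (e : rel T), digraph e ->
  #|T| = (l * m)%N ->
  (min_semideg e [set: T])%:R >= delta * (l * m)%N%:R ->
  exists f : T -> 'I_m,
    forall i : 'I_m,
      #|[set v | f v == i]| = l /\
      (min_semideg e [set v | f v == i])%:R >=
        (delta - 2 * (l%:R `^ (- 3^-1)) *
           \sum_(j < k) ((2 : R) `^ (- (j%:R / 3)))) * l%:R /\
      (delta - 2 * (l%:R `^ (- 3^-1)) *
           \sum_(j < k) ((2 : R) `^ (- (j%:R / 3)))) * l%:R >=
        (delta - 10 * (l%:R `^ (- 3^-1))) * l%:R.
Proof.
exists (K0 ^ 3).+1 => l hl R delta m k d0 hmk T e _ cT hmin.
have hl' : (K0 ^ 3 < l)%N := hl.
have l0 : (0 < l)%N := leq_trans (ltn0Sn _) hl.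
have Hbig : forall x : R, 0 < x -> l%:R <= x ^+ 3 -> 10 * x ^+ 3 * expR (- (x / 72)) < 1.
  move=> x x0 hx; apply: big_ok x0 _.
  have h : (K0 ^ 3)%:R < l%:R :> R by rewrite ltr_nat; exact: hl'.
  rewrite natrX in h; exact: lt_le_trans h hx.
have hW : forall v, v \in [set: T] ->
    delta * (l * m)%:R <= (outdeg_in e [set: T] v)%:R /\
    delta * (l * m)%:R <= (indeg_in e [set: T] v)%:R.
  move=> v vT; have [h1 h2] := @semideg_le T e [set: T] v vT.
  by split; apply: le_trans hmin _; rewrite ler_nat.
have cT' : #|[set: T]| = (l * m)%N by rewrite cardsT.
have [g [gr gc]] := @rec_all R T e l l0 Hbig k m hmk delta [set: T] cT' hW.
have Sb : \sum_(j < k) ((2 : R) `^ (- (j%:R / 3))) <= 5 := geom_bound R k.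
have lp : 0 <= l%:R `^ (- 3^-1) :> R by apply: powR_ge0.
have sec : (delta - 10 * (l%:R `^ (- 3^-1))) * l%:R <=
   (delta - 2 * (l%:R `^ (- 3^-1)) * \sum_(j < k) ((2 : R) `^ (- (j%:R / 3)))) * l%:R.
  apply: ler_wpM2r => //; rewrite lerB //.
  have : 0 <= \sum_(j < k) ((2 : R) `^ (- (j%:R / 3))) by apply: sumr_ge0 => j _; apply: powR_ge0.
  move: Sb lp; move: (\sum_(j < k) ((2 : R) `^ (- (j%:R / 3)))) (l%:R `^ (- 3^-1) : R) => S a.
  clear; move=> h1 h2 h3; nra.
case: m hmk cT hmin hW cT' g gr gc => [|m'] hmk cT hmin hW cT' g gr gc.
  have nT : T -> False.
    move=> v; have : (0 < #|T|)%N by apply/card_gt0P; exists v.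
    by rewrite cT muln0.
  by exists (fun v => False_rect _ (nT v)); case.
exists (fun v => inord (g v)) => i.
have C : [set v | inord (g v) == i] = [set v in [set: T] | g v == i].
  apply/finset.setP => v; rewrite !inE -(inj_eq val_inj) /= inordK //.
  exact: gr.
have [c d] := gc i (ltn_ord i).
rewrite C; split => //; split => //.
apply: semideg_ge; first by rewrite c.
exact: d.
Qed.
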